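(* Let $r\ge1$ and let $\Psi(x,\hbar):=\sum_{j\ge0}s_{(j)}(\tilde{\mathbf t}/\hbar)\,x^j\prod_{l=1}^j\frac{1}{1-\hbar(l-1)}$ with $\tilde t_k=\delta_{k,r}/r$ (the wave function of monotone $r$-orbifold Hurwitz numbers). Then $$\hat x\Big(\hat x^{r-1}+\prod_{j=1}^r\big(1+\hat x\hat y+\hbar(j-1)\big)\hat y\Big)\Psi(x,\hbar)=0,\qquad\hat x=x\cdot,\ \hat y=-\hbar\frac{\partial}{\partial x}.$$ In particular for $r=1$: $\hat x(\hat x\hat y^2+\hat y+1)\Psi=0$.
   Context: $s_{(j)}$ is defined by $\exp(\sum_{m\ge1}t_mx^m)=\sum_{j\ge0}s_{(j)}(\mathbf t)x^j$, and $\tilde{\mathbf t}/\hbar=(\tilde t_1/\hbar,\tilde t_2/\hbar,\dots)$; with $\tilde t_k=\delta_{k,r}/r$ this gives $s_{(j)}=0$ unless $r\mid j$ and $s_{(rn)}=1/(n!\,r^n\hbar^n)$. $\Psi$ is a formal power series in $x$ with coefficients formal in $\hbar$. *)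

(* Defs.v *)
From HB Require Import structures.
From mathcomp Require Import all_boot all_order all_algebra.
Set Implicit Arguments. Unset Strict Implicit. Unset Printing Implicit Defensive.
Import Order.TTheory GRing.Theory Num.Theory.
Local Open Scope ring_scope.

Definition K : fieldType := {fraction {poly rat}}.
Definition hbar : K := (FracField.tofrac 'X).

(* Formal power series in x with coefficients in K: k-th coefficient. *)
Definition fps := nat -> K.

Definition xop (f : fps) : fps := fun k => if k is k'.+1 then f k' else 0.
Definition yop (f : fps) : fps := fun k => - (hbar * (k.+1)%:R * f k.+1).
Definition addop (f g : fps) : fps := fun k => f k + g k.

Definition factop (j : nat) (f : fps) : fps :=
  fun k => f k + xop (yop f) k + hbar * (j.-1)%:R * f k.

(* prod_{j=1}^m (1 + xhat yhat + hbar (j-1)) applied to f (factors commute) *)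
Fixpoint prodop (m : nat) (f : fps) : fps :=
  if m is m'.+1 then factop m'.+1 (prodop m' f) else f.

(* s_{(j)}(tilde t / hbar) with tilde t_k = delta_{k,r}/r *)
Definition s_tilde (r j : nat) : K :=
  if (r %| j)%N then ((j %/ r)`!%:R * r%:R ^+ (j %/ r) * hbar ^+ (j %/ r))^-1
  else 0.

Definition Psi (r : nat) : fps :=
  fun j => s_tilde r j * \prod_(1 <= l < j.+1) (1 - hbar * (l.-1)%:R)^-1.

(* Main.v *)
Require Import Defs.
From HB Require Import structures.
From mathcomp Require Import all_boot all_order all_algebra.
From mathcomp Require Import ring zify.
Import GRing.Theory Num.Theory.
Local Open Scope ring_scope.

Lemma lin_neq0 i : (1 - hbar * i%:R : K) != 0.
Proof.
have -> : (1 - hbar * i%:R : K) = FracField.tofrac (1 - 'X * i%:R : {poly rat}).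
  by rewrite /hbar tofracB tofracM tofrac1 rmorph_nat.
rewrite tofrac_eq0; apply/eqP => /(congr1 (fun p : {poly rat} => p`_0)).
by rewrite coefB coef1 coefXM /= subr0 coef0 => /eqP; rewrite oner_eq0.
Qed.

Lemma nat_neq0 n : (0 < n)%N -> (n%:R : K) != 0.
Proof.
move=> hn; rewrite -(rmorph_nat (@FracField.tofrac _)) tofrac_eq0 -polyC_natr polyC_eq0.
by rewrite pnatr_eq0 -lt0n.
Qed.

Lemma hbar_neq0 : hbar != 0.
Proof. by rewrite /hbar tofrac_eq0 polyX_eq0. Qed.

Lemma xyE (f : fps) k : xop (yop f) k = - (hbar * k%:R * f k).
Proof. by case: k => [|k] //=; rewrite mulr0 mul0r oppr0. Qed.

Lemma prodopE m (f : fps) k :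
  prodop m f k = (\prod_(j < m) (1 + hbar * j%:R - hbar * k%:R)) * f k.
Proof.
elim: m => [|m IH] /=; first by rewrite big_ord0 mul1r.
rewrite /factop xyE IH big_ord_recr /=; ring.
Qed.

Lemma iterE n (f : fps) k :
  iter n xop f k = if (n <= k)%N then f (k - n)%N else 0.
Proof.
elim: n k => [|n IH] k /=; first by rewrite subn0.
case: k => [|k] //=; rewrite IH ltnS; case: ifP => // _; by rewrite subSS.
Qed.

Definition Q n : K := \prod_(i < n) (1 - hbar * i%:R).

Lemma Q_neq0 n : Q n != 0.
Proof. by rewrite /Q prodf_seq_neq0; apply/allP => i _; apply: lin_neq0. Qed.

Lemma PsiE r j : Psi r j = s_tilde r j / Q j.
Proof.
rewrite /Psi /Q prodfV big_add1 big_mkord; congr (_ * (_)^-1).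
Qed.

Lemma QD a b : Q (a + b) = Q a * \prod_(i < b) (1 - hbar * (a + i)%:R).
Proof. by rewrite /Q big_split_ord. Qed.

Lemma alg (F : fieldType) (A B h n1 f r C D : F) : A != 0 -> B != 0 -> h != 0 ->
  n1 != 0 -> f != 0 -> r != 0 -> C != 0 -> D != 0 ->
  (f * C * D)^-1 / A + B * - (h * (n1 * r) * ((n1 * f * (r * C) * (h * D))^-1 / (A * B))) = 0.
Proof. move=> hA hB hh hn hf hr hC hD; field; by rewrite hA hB hh hn hf hr hC hD. Qed.

Theorem proposition6p2 (r : nat) (hr : (1 <= r)%N) :
  forall k : nat,
    xop (addop (iter r.-1 xop (Psi r)) (prodop r (yop (Psi r)))) k = 0.
Proof.
case: r hr => [//|r'] _ [|k] //=.
rewrite /addop iterE.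
move: (prodopE r'.+1 (yop (Psi r'.+1)) k) => /= ->.
rewrite /yop !PsiE.
have [/dvdnP [n hm] | ndiv] := boolP (r'.+1 %| k.+1)%N.
- case: n hm => [//|n] hm.
  have hk : k = (n * r'.+1 + r')%N by rewrite mulSn in hm; lia.
  have -> : (r' <= k)%N by lia.
  have -> : (k - r')%N = (n * r'.+1)%N by lia.
  rewrite hm.
  have e : (n.+1 * r'.+1)%N = (n * r'.+1 + r'.+1)%N by lia.
  rewrite {3}e QD.
  have -> : \prod_(j < r'.+1) (1 + hbar * j%:R - hbar * k%:R) =
            \prod_(i < r'.+1) (1 - hbar * (n * r'.+1 + i)%:R).
    rewrite (reindex_inj rev_ord_inj) /=; apply: eq_bigr => i _.
    have hi := ltn_ord i.
    rewrite subSS hk natrB // !natrD; ring.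
  rewrite /s_tilde !dvdn_mull // !mulnK // factS.
  have h1 := Q_neq0 (n * r'.+1).
  have h2 : \prod_(i < r'.+1) (1 - hbar * (n * r'.+1 + i)%:R) != 0.
    by rewrite prodf_seq_neq0; apply/allP => i _; apply: lin_neq0.
  have h3 := hbar_neq0.
  have h4 : (r'.+1%:R : K) != 0 by apply: nat_neq0.
  have h5 : (n`!%:R : K) != 0 by apply: nat_neq0; apply: fact_gt0.
  have h6 : (n.+1%:R : K) != 0 by apply: nat_neq0.
  rewrite !natrM.
  rewrite (exprS hbar) (exprS (r'.+1%:R : K)).
  have h7 : (r'.+1%:R : K) ^+ n != 0 by exact: expf_neq0 h4.
  have h8 : hbar ^+ n != 0 by exact: expf_neq0 h3.
  exact: (@alg _ _ _ _ _ _ _ _ _ h1 h2 h3 h6 h5 h4 h7 h8).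
- have -> : s_tilde r'.+1 k.+1 = 0 by rewrite /s_tilde (negbTE ndiv).
  rewrite mul0r mulr0 oppr0 mulr0 addr0.
  case: ifP => hle; last by [].
  have -> : s_tilde r'.+1 (k - r') = 0.
    rewrite /s_tilde; case: ifP => // hd; exfalso; move/negP: ndiv; apply.
    have -> : k.+1 = ((k - r') + r'.+1)%N by lia.
    by rewrite dvdn_add.
  by rewrite mul0r.
Qed.
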